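(* Let $r\geq 3$ be an integer and $c>0$ a real number. If $G$ is a graph of order $n$ with minimum degree $$\delta(G)>\left(\frac{r-1}{r}+c\right)n,$$ then $$k_{r+1}(G)>c\,\frac{r}{r+1}\left(\frac{n}{r}\right)^{r+1}\qquad\text{and}\qquad js^{(2,r+1,2)}(G)>c\left(\frac{n}{r}\right)^{r-2}.$$
   Context: All graphs are finite and simple. $\delta(G)$ denotes the minimum degree of $G$ and $k_s(G)$ is the number of $s$-cliques of $G$. For an integer $r\geq 2$, $js^{(2,r+1,2)}(G)$ is the maximum, over all edges $uv$ of $G$, of the number of $(r+1)$-cliques of $G$ containing both $u$ and $v$ (and $0$ if $G$ has no edges). *)

(* Defs.v *)
From mathcomp Require Import all_boot all_order all_algebra.
Set Implicit Arguments. Unset Strict Implicit. Unset Printing Implicit Defensive.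

Definition simple_graph (T : finType) (e : rel T) : Prop :=
  symmetric e /\ irreflexive e.

Definition degree (T : finType) (e : rel T) (v : T) : nat := #|[set w | e v w]|.

(* minimum degree; 0 for the empty graph *)
Definition min_degree (T : finType) (e : rel T) : nat :=
  if [pick v : T] is Some v0 then \big[minn/degree e v0]_(v : T) degree e v else 0.

Definition is_clique (T : finType) (e : rel T) (K : {set T}) : bool :=
  [forall x in K, forall y in K, (x != y) ==> e x y].

Definition num_cliques (T : finType) (e : rel T) (s : nat) : nat :=
  #|[set K : {set T} | is_clique e K & #|K| == s]|.

Definition num_cliques_through (T : finType) (e : rel T) (s : nat) (u v : T) : nat :=
  #|[set K : {set T} | [&& is_clique e K, #|K| == s, u \in K & v \in K]]|.

(* js^{(2,r+1,2)}(G): max over edges uv; 0 if no edges *)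
Definition js2 (T : finType) (e : rel T) (r : nat) : nat :=
  \max_(p : T * T | e p.1 p.2) num_cliques_through e r.+1 p.1 p.2.

(* Main.v *)
Require Import Defs.
From mathcomp Require Import all_boot all_order all_algebra.
From mathcomp Require Import zify ring lra.
Import Order.TTheory GRing.Theory Num.Theory.
Set Implicit Arguments. Unset Strict Implicit.

Section S.
Variables (T : finType) (e : rel T).
Hypothesis (esym : symmetric e) (eirr : irreflexive e).

Definition CN (K : {set T}) := [set v | [forall u in K, e u v]].
Definition PP (K : {set T}) m :=
  [set L : {set T} | [&& is_clique e L, K \subset L & #|L| == #|K| + m]].

Lemma mindeg_le v : min_degree e <= degree e v.
Proof.
rewrite /min_degree; case: pickP => [v0 _|/(_ v)//].
have : v \in index_enum T by rewrite mem_index_enum.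
elim: (index_enum T) => // a s IH; rewrite inE big_cons.
case/orP=> [/eqP->|/IH H]; first exact: geq_minl.
exact: leq_trans (geq_minr _ _) H.
Qed.

Lemma nonnbr_card u : #|[set v | ~~ e u v]| + min_degree e <= #|T|.
Proof.
have := cardsC [set v | e u v]; rewrite -/(degree e u).
have -> : ~: [set v | e u v] = [set v | ~~ e u v].
  by apply/setP=> v; rewrite !inE.
have := mindeg_le u; lia.
Qed.

Lemma union_bound (s : seq T) :
  #|[set v | ~~ all (fun u => e u v) s]| <= \sum_(u <- s) #|[set v | ~~ e u v]|.
Proof.
elim: s => [|u s IH].
  by rewrite big_nil leqn0 cards_eq0; apply/eqP/setP=> v; rewrite !inE.
rewrite big_cons.
have -> : [set v | ~~ all (fun u0 => e u0 v) (u :: s)] =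
          [set v | ~~ e u v] :|: [set v | ~~ all (fun u0 => e u0 v) s].
  by apply/setP=> v; rewrite !inE /= negb_and.
apply: leq_trans (leq_card_setU _ _) _; lia.
Qed.

Lemma CN_card (K : {set T}) : #|T| + #|K| * min_degree e <= #|CN K| + #|K| * #|T|.
Proof.
have EQ : ~: CN K = [set v | ~~ all (fun u => e u v) (enum K)].
  apply/setP=> v; rewrite !inE; congr negb.
  apply/forallP/allP => [H u|H u]; first by rewrite mem_enum => /(implyP (H u)).
  by apply/implyP=> uK; apply: H; rewrite mem_enum.
have := cardsC (CN K); rewrite EQ => H1.
have H2 := union_bound (enum K).
have H3 : \sum_(u <- enum K) #|[set v | ~~ e u v]| + #|K| * min_degree e <= #|K| * #|T|.
  rewrite big_enum /= -!sum_nat_const -big_split /=; apply: leq_sum => u _.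
  exact: nonnbr_card.
lia.
Qed.
End S.

Section S.
Variables (T : finType) (e : rel T).
Hypothesis (esym : symmetric e) (eirr : irreflexive e).

Lemma CN_notin K v : v \in CN e K -> v \notin K.
Proof.
rewrite inE => /forallP H; apply/negP=> vK.
by have := implyP (H v) vK; rewrite eirr.
Qed.

Lemma PP_rec (K : {set T}) m :
  \sum_(v in CN e K) #|PP e (v |: K) m| <= m.+1 * #|PP e K m.+1|.
Proof.
have E : \sum_(L in PP e K m.+1) #|L :\: K| = #|PP e K m.+1| * m.+1.
  rewrite -sum_nat_const; apply: eq_bigr => L; rewrite inE => /and3P[_ sKL /eqP cL].
  rewrite cardsD (setIidPr sKL) cL; lia.
rewrite mulnC -E.
have E2 : \sum_(L in PP e K m.+1) #|L :\: K| =
  \sum_v \sum_(L in PP e K m.+1) (if v \in L :\: K then 1 else 0).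
  rewrite exchange_big /=; apply: eq_bigr => L _.
  by rewrite -sum1_card big_mkcond.
rewrite E2 [X in X <= _]big_mkcond /=; apply: leq_sum => v _.
case: ifP => // vC.
rewrite -sum1_card [X in X <= _]big_mkcond [X in _ <= X]big_mkcond /=.
apply: leq_sum => L _.
case: ifP => // LP.
move: LP; rewrite inE => /and3P[cL sL /eqP cardL].
have vK := CN_notin vC.
have -> : L \in PP e K m.+1.
  rewrite inE cL (subset_trans (subsetUr _ _) sL) /= cardL cardsU1 vK; apply/eqP; lia.
have -> : v \in L :\: K.
  by rewrite inE vK; apply: (subsetP sL); rewrite setU11.
by [].
Qed.
End S.

Local Open Scope ring_scope.

Section R.
Variables (R : realFieldType) (r : nat) (c : R) (T : finType) (e : rel T).
Hypothesis (esym : symmetric e) (eirr : irreflexive e).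
Hypothesis (r3 : (3 <= r)%N) (c0 : 0 < c).
Let n : R := (#|T|)%:R.
Let d : R := (min_degree e)%:R.
Hypothesis Hd : ((r%:R - 1) / r%:R + c) * n < d.

Definition g (j : nat) : R := j%:R * d - (j%:R - 1) * n.

Lemma rpos : 0 < r%:R :> R.
Proof. by rewrite ltr0n; lia. Qed.

Lemma n0 : 0 <= n. Proof. exact: ler0n. Qed.

Lemma rd : (r%:R - 1) * n + r%:R * c * n < r%:R * d.
Proof.
have rP := rpos.
have -> : (r%:R - 1) * n + r%:R * c * n = r%:R * (((r%:R - 1) / r%:R + c) * n).
  by field; rewrite gt_eqF.
by rewrite ltr_pM2l.
Qed.

Lemma g_lb j : (j <= r)%N -> (r%:R - j%:R) * n <= r%:R * g j.
Proof.
move=> jr; have H := rd; have nn := n0.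
have j0 : 0 <= j%:R :> R by apply: ler0n.
have jr' : j%:R <= r%:R :> R by rewrite ler_nat.
have cn : 0 <= c * n by apply: mulr_ge0 => //; apply: ltW.
have : 0 <= j%:R * (r%:R * d - ((r%:R - 1) * n + r%:R * c * n)).
  by apply: mulr_ge0 => //; lra.
have : 0 <= j%:R * r%:R * (c * n) by apply: mulr_ge0 => //; apply: mulr_ge0.
rewrite /g; nra.
Qed.

Lemma g_ge0 j : (j <= r)%N -> 0 <= g j.
Proof.
move=> jr; have := g_lb jr; have rP := rpos; have nn := n0.
have : 0 <= (r%:R - j%:R) * n.
  by apply: mulr_ge0 => //; rewrite subr_ge0 ler_nat.
move=> h1 h2; have : 0 <= r%:R * g j by lra.
by rewrite pmulr_rge0.
Qed.

Lemma g_r : r%:R * c * n < g r.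
Proof. have := rd; rewrite /g; lra. Qed.

Lemma CN_real (K : {set T}) : g #|K| <= (#|CN e K|)%:R.
Proof.
have := CN_card e K; rewrite -(ler_nat R) !natrD !natrM -/n -/d /g; lra.
Qed.

Lemma clique_add (K : {set T}) v :
  is_clique e K -> v \in CN e K -> is_clique e (v |: K).
Proof.
move=> /forallP cK; rewrite inE => /forallP vC.
apply/forallP=> x; apply/implyP; rewrite in_setU1 => xK.
apply/forallP=> y; apply/implyP; rewrite in_setU1 => yK.
case/orP: xK => [/eqP ->|xK]; case/orP: yK => [/eqP ->|yK]; apply/implyP=> xy.
- by rewrite eqxx in xy.
- by rewrite esym; apply: (implyP (vC y)).
- exact: (implyP (vC x)).
- by move: (cK x); rewrite xK /= => /forallP/(_ y); rewrite yK xy.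
Qed.

Lemma PP_lb m : forall K : {set T}, is_clique e K -> (#|K| + m <= r.+1)%N ->
  \prod_(j < m) g (#|K| + j) <= (m`!)%:R * (#|PP e K m|)%:R.
Proof.
elim: m => [|m IH] K cK Km.
  rewrite big_ord0 mul1r ler1n card_gt0; apply/set0Pn; exists K.
  by rewrite inE cK subxx addn0 eqxx.
rewrite big_ord_recl addn0 /=.
set X := \prod_(j < m) _.
have X0 : 0 <= X.
  apply: prodr_ge0 => j _; apply: g_ge0; rewrite /bump leq0n; have := ltn_ord j; lia.
have Hv : forall v, v \in CN e K -> X <= (m`!)%:R * (#|PP e (v |: K) m|)%:R.
  move=> v vC; have vK := CN_notin eirr vC.
  have cv : #|v |: K| = (#|K|).+1 by rewrite cardsU1 vK.
  have := IH (v |: K) (clique_add cK vC); rewrite cv.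
  have -> : \prod_(j < m) g ((#|K|).+1 + j) = X.
    by apply: eq_bigr => j _; rewrite addSnnS.
  by apply; lia.
have S1 : (#|CN e K|)%:R * X <= (m`!)%:R * (\sum_(v in CN e K) #|PP e (v |: K) m|)%:R.
  have -> : (#|CN e K|)%:R * X = \sum_(v in CN e K) X by rewrite sumr_const mulr_natl.
  rewrite natr_sum big_distrr /=.
  by apply: ler_sum => v vC; apply: Hv.
have S2 := PP_rec eirr K m.
apply: le_trans (ler_wpM2r X0 (CN_real K)) _.
apply: le_trans S1 _.
rewrite factS -!natrM ler_nat -mulnA mulnCA leq_mul2l S2 orbT //.
Qed.

Lemma prod_lb k : (k <= r)%N ->
  (k`!)%:R * (n / r%:R) ^+ k <= \prod_(j < k) g ((r - k) + j)%N.
Proof.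
elim: k => [|k IH] kr; first by rewrite big_ord0 mulr1.
have rP := rpos; have nn := n0.
rewrite big_ord_recl addn0 /=.
have -> : \prod_(j < k) g (r - k.+1 + bump 0 j)%N = \prod_(j < k) g (r - k + j)%N.
  apply: eq_bigr => j _; congr g; rewrite /bump leq0n; lia.
have h1 : (k.+1)%:R * (n / r%:R) <= g (r - k.+1).
  have := g_lb (leq_subr k.+1 r).
  rewrite -natrB ?leq_subr // subKn // => h.
  rewrite mulrA ler_pdivrMr //; lra.
have -> : (k.+1)`!%:R * (n / r%:R) ^+ k.+1 =
  ((k.+1)%:R * (n / r%:R)) * ((k`!)%:R * (n / r%:R) ^+ k).
  by rewrite factS natrM exprS; ring.
apply: ler_pM => //.
- by apply: mulr_ge0 => //; apply: divr_ge0 => //; apply: ltW.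
- by apply: mulr_ge0 => //; apply: exprn_ge0; apply: divr_ge0 => //; apply: ltW.
- by apply: IH; lia.
Qed.
End R.

Unset Implicit Arguments.

Theorem corollary2 (R : realFieldType) (r : nat) (c : R)
  (T : finType) (e : rel T) :
  (3 <= r)%N -> 0 < c -> simple_graph e ->
  (min_degree e)%:R > ((r%:R - 1) / r%:R + c) * (#|T|)%:R ->
  (num_cliques e r.+1)%:R > c * (r%:R / r.+1%:R) * ((#|T|)%:R / r%:R) ^+ r.+1
  /\ (js2 e r)%:R > c * ((#|T|)%:R / r%:R) ^+ (r - 2).
Proof.
move=> r3 c0 [esym eirr] Hd.
have rP : 0 < r%:R :> R by rewrite ltr0n; lia.
have coef : 0 < (r%:R - 1) / r%:R + c :> R.
  have : 0 <= (r%:R - 1) / r%:R :> R.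
    by apply: divr_ge0; [rewrite subr_ge0 ler1n; lia | apply: ltW].
  lra.
have Tne : (0 < #|T|)%N.
  case: (posnP #|T|) => // T0; exfalso.
  move: Hd; rewrite T0 mulr0 /min_degree.
  case: pickP => [v _|_]; first by have := card0_eq T0 v.
  by rewrite ltxx.
set n : R := (#|T|)%:R in Hd *.
set d : R := (min_degree e)%:R in Hd.
have n1 : 1 <= n by rewrite /n ler1n.
have gr := g_r r3 c0 Hd.
have cn : c * n <= r%:R * c * n.
  have : 1 <= r%:R :> R by rewrite ler1n; lia.
  have : 0 <= c * n by apply: mulr_ge0; lra.
  nra.
have gr0 : 0 <= g R e r.
  have : 0 <= r%:R * c * n by apply: mulr_ge0; [apply: mulr_ge0|]; lra.
  lra.
split.
- have H := PP_lb esym eirr r3 c0 Hd (m := r.+1) (K := set0).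
  rewrite cards0 add0n in H.
  have cl : is_clique e set0 by apply/forallP=> x; rewrite inE.
  have {cl} H := H cl (leqnn _).
  have E : #|PP e set0 r.+1| = num_cliques e r.+1.
    by rewrite /num_cliques /PP; apply: eq_card => L; rewrite !inE sub0set cards0 add0n.
  rewrite E in H.
  rewrite big_ord_recr /= in H.
  have P := prod_lb r3 c0 Hd (leqnn r).
  have E2 : \prod_(j < r) g R e (r - r + j)%N = \prod_(j < r) g R e (0 + j)%N.
    by apply: eq_bigr => j _; rewrite subnn.
  rewrite E2 in P.
  set F : R := (r`!)%:R in P.
  set Q : R := (n / r%:R) ^+ r in P.
  have FQ : 0 < F * Q.
    apply: mulr_gt0; first by rewrite /F ltr0n fact_gt0.
    by apply: exprn_gt0; apply: divr_gt0; lra.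
  have key : ((r.+1)`!)%:R * (c * (r%:R / r.+1%:R) * (n / r%:R) ^+ r.+1)
             = F * Q * (c * n).
    rewrite /F /Q factS natrM exprS -natr1; field.
    by apply/andP; split; rewrite ?gt_eqF //; lra.
  have fp : 0 < ((r.+1)`!)%:R :> R by rewrite ltr0n fact_gt0.
  rewrite -(ltr_pM2l fp) key.
  apply: lt_le_trans H.
  apply: lt_le_trans (_ : F * Q * g R e r <= _).
    by rewrite ltr_pM2l //; lra.
  by rewrite add0n ler_wpM2r.
- have npos : 0 < n by lra.
  have d0 : (0 < min_degree e)%N.
    rewrite -(ltr0n R) -/d; have := mulr_gt0 coef npos; lra.
  have [v0 _] := card_gt0P Tne.
  have : (0 < degree e v0)%N by apply: leq_trans d0 (mindeg_le e v0).
  rewrite /degree => /card_gt0P [w]; rewrite inE => ew.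
  have vw : v0 != w by apply/eqP => h; rewrite h eirr in ew.
  set K := [set v0; w].
  have cardK : #|K| = 2%N by rewrite cards2 vw.
  have cK : is_clique e K.
    apply/forallP=> x; apply/implyP; rewrite in_set2 => xK.
    apply/forallP=> y; apply/implyP; rewrite in_set2 => yK.
    case/orP: xK => /eqP ->; case/orP: yK => /eqP ->.
    - by rewrite eqxx.
    - by rewrite ew implybT.
    - by rewrite esym ew implybT.
    - by rewrite eqxx.
  have H := PP_lb esym eirr r3 c0 Hd (m := (r-2).+1) (K := K) cK.
  rewrite cardK in H; have {}H := H ltac:(clear -r3; lia).
  rewrite big_ord_recr /= (subnKC (ltnW r3)) in H.
  have P := prod_lb r3 c0 Hd (leq_subr 2 r).
  have E2 : \prod_(j < r - 2) g R e (r - (r - 2) + j)%N = \prod_(j < r - 2) g R e (2 + j)%N.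
    by apply: eq_bigr => j _; congr g; clear -r3; lia.
  rewrite E2 in P.
  have cb : (#|PP e K (r - 2).+1| <= js2 e r)%N.
    apply: leq_trans (_ : _ <= num_cliques_through e r.+1 v0 w)%N _.
      apply: subset_leq_card; apply/subsetP => L; rewrite !inE => /and3P[cL sL /eqP cardL].
      rewrite cL cardL cardK (subsetP sL v0) ?(subsetP sL w) ?in_set2 ?eqxx ?orbT //=.
      apply/eqP; clear -r3; lia.
    exact: (leq_bigmax_cond (F := fun p => num_cliques_through e r.+1 p.1 p.2) (v0, w) ew).
  set F : R := ((r - 2)`!)%:R in P.
  set Q : R := (n / r%:R) ^+ (r - 2) in P *.
  have FQ : 0 < F * Q.
    apply: mulr_gt0; first by rewrite /F ltr0n fact_gt0.
    by apply: exprn_gt0; apply: divr_gt0; lra.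
  have fp : 0 < (((r - 2).+1)`!)%:R :> R by rewrite ltr0n fact_gt0.
  have key : (((r - 2).+1)`!)%:R * (c * Q) = F * Q * (((r - 2).+1)%:R * c).
    by rewrite /F factS natrM; ring.
  have rr : ((r - 2).+1)%:R <= r%:R :> R by rewrite ler_nat; clear -r3; lia.
  have lt1 : ((r - 2).+1)%:R * c < g R e r.
    have : 0 <= r%:R * c * (n - 1) by apply: mulr_ge0; [apply: mulr_ge0|]; lra.
    have : ((r - 2).+1)%:R * c <= r%:R * c by rewrite ler_pM2r.
    lra.
  rewrite -(ltr_pM2l fp) key.
  apply: lt_le_trans (_ : F * Q * g R e r <= _).
    by rewrite ltr_pM2l.
  apply: le_trans (_ : \prod_(i < r - 2) g R e (2 + i) * g R e r <= _).
    by rewrite ler_wpM2r.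
  apply: le_trans H _.
  by rewrite ler_wpM2l ?ler0n // ler_nat.
Qed.
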